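(* Let $R$ be a local ring and $s\in R$ a central element with $s\in J(R)$. For $A\in M_2(R;s)$, we have $A^n\in J\big(M_2(R;s)\big)$ for some positive integer $n$ if and only if $A\in J\big(M_2(R;s)\big)$.
   Context: All rings are associative with identity. A ring $R$ is local if $R/J(R)$ is a division ring, where $J(R)$ is the Jacobson radical. For a ring $R$ and a central element $s\in R$, $M_2(R;s)$ denotes the ring whose elements are the $2\times 2$ arrays $\left[\begin{smallmatrix} a&b\\ c&d\end{smallmatrix}\right]$ with $a,b,c,d\in R$, with componentwise addition and multiplication $\left[\begin{smallmatrix} a&b\\ c&d\end{smallmatrix}\right]\left[\begin{smallmatrix} a'&b'\\ c'&d'\end{smallmatrix}\right]=\left[\begin{smallmatrix} aa'+s^2bc'&ab'+bd'\\ ca'+dc'&s^2cb'+dd'\end{smallmatrix}\right]$. $J\big(M_2(R;s)\big)$ denotes the Jacobson radical of this ring. *)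

(* Defs.v *)
From HB Require Import structures.
From mathcomp Require Import all_boot all_order all_algebra.
Set Implicit Arguments. Unset Strict Implicit. Unset Printing Implicit Defensive.
Import GRing.Theory.
Local Open Scope ring_scope.

Definition left_ideal (R : pzRingType) (I : R -> Prop) : Prop :=
  I 0 /\ (forall x y, I x -> I y -> I (x - y)) /\ (forall r x, I x -> I (r * x)).

Definition maximal_left_ideal (R : pzRingType) (I : R -> Prop) : Prop :=
  [/\ left_ideal I, ~ I 1 &
      forall K : R -> Prop, left_ideal K -> ~ K 1 ->
        (forall x, I x -> K x) -> forall x, K x -> I x].

Definition jacobson (R : pzRingType) (x : R) : Prop :=
  forall I : R -> Prop, maximal_left_ideal I -> I x.

(* R is local iff R/J(R) is a division ring, written out: the class of 1 is
   nonzero, and every nonzero class has a two-sided inverse modulo J(R). *)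
Definition local_ring (R : pzRingType) : Prop :=
  ~ jacobson (1 : R) /\
  forall x : R, ~ jacobson x ->
    exists y : R, jacobson (x * y - 1) /\ jacobson (y * x - 1).

Definition central (R : pzRingType) (s : R) : Prop := forall x : R, s * x = x * s.

Section M2.
Variables (R : pzRingType) (s : R) (hs : central s).

(* An element ((a, b), (c, d)) stands for the array [a b; c d]. *)
(* The type depends on the centrality proof so that the ring structure
   below can be attached to it canonically. *)
Definition M2_of (_ : central s) : Type := ((R * R) * (R * R))%type.
Local Notation M2 := (M2_of hs).
HB.instance Definition _ := GRing.Zmodule.on M2.

Definition M2mk (a b c d : R) : M2 := ((a, b), (c, d)).

Definition M2one : M2 := M2mk 1 0 0 1.

Definition M2mul (A B : M2) : M2 :=
  let: ((a, b), (c, d)) := A in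
  let: ((a', b'), (c', d')) := B in
  M2mk (a * a' + s ^+ 2 * b * c') (a * b' + b * d')
       (c * a' + d * c') (s ^+ 2 * c * b' + d * d').

Let t := s ^+ 2.
Let ht (x : R) : t * x = x * t.
Proof. by rewrite /t expr2 -mulrA hs !mulrA hs. Qed.

Lemma M2mulA : associative M2mul.
Proof.
move=> [[a b] [c d]] [[a' b'] [c' d']] [[a'' b''] [c'' d'']].
rewrite /M2mul /M2mk -/t.
congr (_, _); congr (_, _);
  rewrite !(mulrDl, mulrDr, mulrA) -/t; rewrite /t expr2 ?mulrA; do 3 rewrite -?(hs a) -?(hs b) -?(hs c) -?(hs d) -?(hs (s * a)) -?(hs (s * b)) -?(hs (s * c)) -?(hs (s * d)) ?mulrA.
all: by rewrite addrACA.
Qed.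

Lemma M2mul1r : left_id M2one M2mul.
Proof.
move=> [[a b] [c d]]; rewrite /M2mul /M2one /M2mk.
by rewrite !(mul1r, mul0r, mulr0, addr0, add0r).
Qed.

Lemma M2mulr1 : right_id M2one M2mul.
Proof.
move=> [[a b] [c d]]; rewrite /M2mul /M2one /M2mk.
by rewrite !(mulr1, mul0r, mulr0, addr0, add0r).
Qed.

Lemma M2mulDl : left_distributive M2mul +%R.
Proof.
move=> [[a b] [c d]] [[a' b'] [c' d']] [[a'' b''] [c'' d'']].
rewrite /M2mul /M2mk /=.
by congr (_, _); congr (_, _); rewrite !(mulrDl, mulrDr) addrACA.
Qed.

Lemma M2mulDr : right_distributive M2mul +%R.
Proof.
move=> [[a b] [c d]] [[a' b'] [c' d']] [[a'' b''] [c'' d'']].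
rewrite /M2mul /M2mk /=.
by congr (_, _); congr (_, _); rewrite !(mulrDl, mulrDr) addrACA.
Qed.

HB.instance Definition _ := GRing.Zmodule_isPzRing.Build M2
  M2mulA M2mul1r M2mulr1 M2mulDl M2mulDr.

Lemma M2mulE (A B : M2) : A * B = M2mul A B.
Proof. by []. Qed.

End M2.

(* Main.v *)
Require Import Defs.
From HB Require Import structures.
From mathcomp Require Import all_boot all_order all_algebra.
From mathcomp Require Import boolp classical_sets.
From Stdlib Require Import Classical.
Import GRing.Theory.
Local Open Scope ring_scope.
Local Open Scope classical_set_scope.

Section Rfacts.
Context {R : pzRingType}.

Lemma jac0 : jacobson (0 : R).
Proof. by move=> I [[h _] _ _]. Qed.

Lemma jacB (x y : R) : jacobson x -> jacobson y -> jacobson (x - y).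
Proof. by move=> hx hy I hI; have [[_ [hB _]] _ _] := hI; apply: hB; [apply: hx|apply: hy]. Qed.

Lemma jacM (r x : R) : jacobson x -> jacobson (r * x).
Proof. by move=> hx I hI; have [[_ [_ hM]] _ _] := hI; apply: hM; apply: hx. Qed.

Lemma jacN (x : R) : jacobson x -> jacobson (- x).
Proof. by move=> hx; rewrite -sub0r; apply: jacB => //; apply: jac0. Qed.

Lemma jacD (x y : R) : jacobson x -> jacobson y -> jacobson (x + y).
Proof. by move=> hx hy; rewrite -(opprK y); apply: jacB => //; apply: jacN. Qed.



Lemma jac_unit (j : R) : jacobson j -> exists u, u * (1 - j) = 1.
Proof.
move=> hj; apply: NNPP => hnu.
pose P (X : set R) := X = set0 \/ (left_ideal X /\ ~ X 1 /\ X (1 - j)).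
have [A [PA Amax]] : exists A, P A /\ forall B, A `<` B -> ~ P B.
  apply: Zorn_bigcup => F FP Ftot.
  have Fid X : F X -> forall x, X x -> left_ideal X /\ ~ X 1 /\ X (1 - j).
    move=> FX x Xx; case: (FP X FX) => // X0; by rewrite X0 in Xx.
  case: (pselect (exists X, F X /\ exists x, X x)) => [[X0 [FX0 [x0 X0x0]]] | hall]; last first.
    left; apply/seteqP; split => x // [X FX Xx]; apply: hall; exists X; split => //; by exists x.
  have [[h0 [hB hM]] [h1 hj1]] := Fid X0 FX0 x0 X0x0.
  right; split; [split; [|split]|split].
  - by exists X0.
  - move=> x y [X1 FX1 X1x] [X2 FX2 X2y].
    have [[_ [hB1 _]] _] := Fid X1 FX1 x X1x.
    have [[_ [hB2 _]] _] := Fid X2 FX2 y X2y.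
    case: (Ftot X1 X2 FX1 FX2) => sub.
    + by exists X2 => //; apply: hB2 => //; apply: sub.
    + by exists X1 => //; apply: hB1 => //; apply: sub.
  - move=> r x [X FX Xx]; have [[_ [_ hM1]] _] := Fid X FX x Xx.
    by exists X => //; apply: hM1.
  - by move=> [X FX X1]; have [_ []] := Fid X FX 1 X1.
  - by exists X0.
pose L (x : R) := exists r, x = r * (1 - j).
have PL : P L.
  right; split; [split; [|split]|split].
  - by exists 0; rewrite mul0r.
  - by move=> x y [r ->] [r' ->]; exists (r - r'); rewrite mulrBl.
  - by move=> r x [r' ->]; exists (r * r'); rewrite mulrA.
  - by move=> [r h]; apply: hnu; exists r.
  - by exists 1; rewrite mul1r.
case: PA => [A0 | [liA [nA1 Aj]]].
  apply: (Amax L) => //; rewrite A0; split => // sub.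
  by have := sub (1 - j) (ex_intro _ 1 (esym (mul1r _))).
have mA : maximal_left_ideal A.
  split => // K liK nK AK x Kx; apply: NNPP => nAx.
  apply: (Amax K); first by split => // sub; apply: nAx; apply: sub.
  by right; split => //; split => //; apply: AK.
have Aj' := hj A mA.
have [h0 [hB _]] := liA.
apply: nA1; have -> : (1 : R) = (1 - j) - (0 - j) by rewrite sub0r opprK subrK.
by apply: (hB) => //; apply: (hB).
Qed.

Lemma local_linv (x : R) : local_ring R -> ~ jacobson x -> exists q, q * x = 1.
Proof.
move=> [_ hl] nx; have [y [_ hyx]] := hl x nx.
have [u hu] := jac_unit _ (jacN _ hyx).
by exists (u * y); rewrite -mulrA -[RHS]hu opprK addrC subrK.
Qed.

Lemma local_pow (a : R) (n : nat) : local_ring R -> (0 < n)%N ->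
  jacobson (a ^+ n) -> jacobson a.
Proof.
move=> hl n0 han; apply: NNPP => na.
have [q hq] := local_linv _ hl na.
have key k : q ^+ k * a ^+ k = 1.
  elim: k => [|k IH]; first by rewrite !expr0 mul1r.
  by rewrite exprSr exprS -mulrA (mulrA q) hq mul1r.
by case: hl => h1 _; apply: h1; rewrite -(key n); apply: jacM.
Qed.

End Rfacts.

Section M2facts.
Context {R : pzRingType} (s : R) (hs : central s) (hloc : local_ring R) (hsJ : jacobson s).
Local Notation M2 := (M2_of hs).

Lemma s2C (x : R) : s ^+ 2 * x = x * s ^+ 2.
Proof. by rewrite expr2 -mulrA hs hs -mulrA. Qed.

Lemma jacs2 (x : R) : jacobson (s ^+ 2 * x).
Proof. by rewrite s2C expr2 mulrA; apply: jacM. Qed.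

Lemma jacs2' (x y : R) : jacobson (s ^+ 2 * x * y).
Proof. by rewrite -mulrA; apply: jacs2. Qed.

Lemma M2E (a b c d a' b' c' d' : R) :
  (((a, b), (c, d)) : M2) * ((a', b'), (c', d')) =
  ((a * a' + s ^+ 2 * b * c', a * b' + b * d'), (c * a' + d * c', s ^+ 2 * c * b' + d * d')).
Proof. by []. Qed.

Lemma M2oneE : (1 : M2) = ((1, 0), (0, 1)).
Proof. by []. Qed.

Lemma M2subE (a b c d a' b' c' d' : R) :
  (((a, b), (c, d)) : M2) - ((a', b'), (c', d')) = ((a - a', b - b'), (c - c', d - d')).
Proof. by []. Qed.

Lemma M2addE (a b c d a' b' c' d' : R) :
  (((a, b), (c, d)) : M2) + ((a', b'), (c', d')) = ((a + a', b + b'), (c + c', d + d')).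
Proof. by []. Qed.


Lemma li_sub (T : pzRingType) (I : T -> Prop) x y : left_ideal I -> I x -> I y -> I (x - y).
Proof. by move=> [_ [h _]]; apply: h. Qed.
Lemma li_opp (T : pzRingType) (I : T -> Prop) x : left_ideal I -> I x -> I (- x).
Proof. by move=> li hx; rewrite -sub0r; apply: li_sub => //; case: li. Qed.
Lemma li_add (T : pzRingType) (I : T -> Prop) x y : left_ideal I -> I x -> I y -> I (x + y).
Proof. by move=> li hx hy; rewrite -(opprK y); apply: li_sub => //; apply: li_opp. Qed.
Lemma li_mul (T : pzRingType) (I : T -> Prop) r x : left_ideal I -> I x -> I (r * x).
Proof. by move=> [_ [_ h]]; apply: h. Qed.

Arguments li_sub {T I x y}. Arguments li_opp {T I x}. Arguments li_add {T I x y}. Arguments li_mul {T I} r {x}.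

Lemma I1_max : maximal_left_ideal (fun X : M2 => jacobson X.1.1).
Proof.
split.
- split; first exact: jac0.
  split; first by move=> [[? ?] [? ?]] [[? ?] [? ?]] /= h1 h2; apply: jacB.
  move=> [[? ?] [? ?]] [[? ?] [? ?]] /= h.
  by apply: jacD; [apply: jacM | apply: jacs2'].
- by case: hloc.
move=> K liK nK IK [[x1 x2] [x3 x4]] Kx /=; apply: NNPP => nx.
have [q hq] := local_linv _ hloc nx.
pose Y : M2 := ((q, 0), (0, 0)).
have KY : K (Y * ((x1, x2), (x3, x4))) by apply: li_mul.
have K1 : K (1 - Y * ((x1, x2), (x3, x4))).
  apply: IK; rewrite /Y /=.
  by rewrite hq mulr0 mul0r addr0 subrr; apply: jac0.
by apply: nK; rewrite -(subrK (Y * ((x1, x2), (x3, x4))) 1); apply: li_add.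
Qed.

Lemma I2_max : maximal_left_ideal (fun X : M2 => jacobson X.2.2).
Proof.
split.
- split; first exact: jac0.
  split; first by move=> [[? ?] [? ?]] [[? ?] [? ?]] /= h1 h2; apply: jacB.
  move=> [[? ?] [? ?]] [[? ?] [? ?]] /= h.
  by apply: jacD; [apply: jacs2' | apply: jacM].
- by case: hloc.
move=> K liK nK IK [[x1 x2] [x3 x4]] Kx /=; apply: NNPP => nx.
have [q hq] := local_linv _ hloc nx.
pose Y : M2 := ((0, 0), (0, q)).
have KY : K (Y * ((x1, x2), (x3, x4))) by apply: li_mul.
have K1 : K (1 - Y * ((x1, x2), (x3, x4))).
  apply: IK; rewrite /Y /=.
  by rewrite hq mulr0 mul0r add0r subrr; apply: jac0.
by apply: nK; rewrite -(subrK (Y * ((x1, x2), (x3, x4))) 1); apply: li_add.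
Qed.

Lemma pow11 (a b c d : R) (n : nat) :
  jacobson (((((a, b), (c, d)) : M2) ^+ n).1.1 - a ^+ n) /\
  jacobson (((((a, b), (c, d)) : M2) ^+ n).2.2 - d ^+ n).
Proof.
elim: n => [|n [IH1 IH2]].
  by rewrite !expr0 /= !subrr; split; apply: jac0.
rewrite !exprS.
move: IH1 IH2; case: ((((a, b), (c, d)) : M2) ^+ n) => [[p q] [r t]] /= IH1 IH2.
split.
- have -> : a * p + s ^+ 2 * b * r - a * a ^+ n = a * (p - a ^+ n) + s ^+ 2 * b * r.
    by rewrite mulrBr addrAC.
  by apply: jacD; [apply: jacM | apply: jacs2'].
- have -> : s ^+ 2 * c * q + d * t - d * d ^+ n = s ^+ 2 * c * q + d * (t - d ^+ n).
    by rewrite mulrBr addrA.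
  by apply: jacD; [apply: jacs2' | apply: jacM].
Qed.

Lemma noM (M : M2 -> Prop) al be ga de u v : left_ideal M -> ~ M 1 ->
  M ((al, be), (ga, de)) -> u * al = 1 -> v * de = 1 -> False.
Proof.
move=> liM nM Mm hu hv.
have [w hw] := jac_unit _ (jacs2' (v * ga) (u * be)).
pose m : M2 := ((al, be), (ga, de)).
pose P := (((u, 0), (0, 0)) : M2) * m.
pose Q := (((0, 0), (0, v)) : M2) * m.
pose E := (((0, 0), (0, w)) : M2) * (Q - (((0, 0), (v * ga, 0)) : M2) * P).
have e1 : (1 : M2) = (P - (((0, u * be), (0, 0)) : M2) * E) + E.
  rewrite /E /P /Q /m !(M2E, M2subE) M2addE M2oneE /=.
  rewrite !(mul0r, mulr0, addr0, add0r, subr0, sub0r, mulr1, mul1r, oppr0) hu hv.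
  have -> : v * ga * 1 = v * ga by exact: mulr1.
  by rewrite subrr !mulr0 subr0 hw mulr1 subrr.
have MP : M P by apply: li_mul.
have MQ : M Q by apply: li_mul.
have ME : M E by apply: (li_mul _ liM); apply: (li_sub liM) => //; apply: (li_mul _ liM).
by apply: nM; rewrite e1; apply: (li_add liM) => //; apply: (li_sub liM) => //; apply: (li_mul _ liM).
Qed.

Lemma KJ (A : M2) : jacobson A.1.1 -> jacobson A.2.2 -> jacobson A.
Proof.
move: A => [[a b] [c d]] /= ja jd M hM; apply: NNPP => nA.
have [liM nM1 mx] := hM.
pose K (X : M2) := exists m (Y : M2), M m /\ X = m + Y * ((a, b), (c, d)).
have liK : left_ideal K.
  split; first by exists 0, 0; split; [case: liM | rewrite mul0r addr0].
  split.
    move=> x y [m1 [Y1 [M1 ->]]] [m2 [Y2 [M2' ->]]].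
    exists (m1 - m2), (Y1 - Y2); split; first exact: li_sub.
    by rewrite mulrBl opprD addrACA.
  move=> r x [m1 [Y1 [M1 ->]]]; exists (r * m1), (r * Y1); split; first exact: li_mul.
  by rewrite mulrDr mulrA.
have K1 : K 1.
  apply: NNPP => nK1; apply: nA; apply: (mx K liK nK1).
  - by move=> x Mx; exists x, 0; rewrite mul0r addr0.
  - by exists 0, 1; rewrite mul1r add0r; split => //; case: liM.
have [m [[[y1 y2] [y3 y4]] [Mm e]]] := K1.
have em : m = 1 - (((y1, y2), (y3, y4)) : M2) * ((a, b), (c, d)) by rewrite e addrK.
move: Mm; rewrite em M2E M2oneE M2subE => Mm.
have j1 : jacobson (y1 * a + s ^+ 2 * y2 * c) by apply: jacD; [apply: jacM | apply: jacs2'].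
have j2 : jacobson (s ^+ 2 * y3 * b + y4 * d) by apply: jacD; [apply: jacs2' | apply: jacM].
have [u hu] := jac_unit _ j1.
have [v hv] := jac_unit _ j2.
exact: (noM M _ _ _ _ _ _ liM nM1 Mm hu hv).
Qed.

End M2facts.

Theorem lemma2p6 (R : pzRingType) (s : R) (hs : central s)
    (hloc : local_ring R) (hsJ : jacobson s) (A : M2_of hs) :
  (exists n : nat, (0 < n)%N /\ jacobson (A ^+ n)) <-> jacobson A.
Proof.
split; last by move=> hA; exists 1%N; rewrite expr1.
move=> [n [n0 hAn]].
move: hAn; case: A => [[a b] [c d]] hAn.
have [p1 p2] := pow11 s hs hsJ a b c d n.
apply: (KJ s hs hsJ ((a, b), (c, d))) => /=.
- apply: (local_pow _ _ hloc n0).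
  have h := hAn _ (I1_max s hs hloc hsJ).
  by rewrite -(subKr (((((a, b), (c, d)) : M2_of hs) ^+ n).1.1) (a ^+ n)); apply: jacB.
- apply: (local_pow _ _ hloc n0).
  have h := hAn _ (I2_max s hs hloc hsJ).
  by rewrite -(subKr (((((a, b), (c, d)) : M2_of hs) ^+ n).2.2) (d ^+ n)); apply: jacB.
Qed.
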